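(* Let $m\ge1$ be an integer and $\varepsilon\ge0$. If $\max_{\ell}|\hat\beta_\ell-\beta_\ell|\le\varepsilon$, then $$\hat{\mathcal R}(m)\le\mathcal R^*(m)+\varepsilon,\qquad \max_{\bar\beta\in\mathcal B^*}|(I-\widehat\Pi_m)^{1/2}\bar\beta|\le\mathcal R^*(m)+2\varepsilon.$$ Moreover, when $m<m^*$, also $\hat{\mathcal R}(m)\ge(\mathcal R^*(m)-\varepsilon)_+$.
   Context: Let $\beta_1,\dots,\beta_L\in\mathbb R^d$ be vectors lying in an $m^*$-dimensional linear subspace of $\mathbb R^d$, and let $\hat\beta_1,\dots,\hat\beta_L\in\mathbb R^d$ be arbitrary vectors. $|\cdot|$ is the Euclidean norm, $I$ the $d\times d$ identity, $A\preceq B$ means $B-A$ is positive semidefinite, $x_+=\max(x,0)$. Let $\mathcal A_m=\{\Pi\in\mathbb R^{d\times d}:\Pi=\Pi^\top,\ 0\preceq\Pi\preceq I,\ \operatorname{tr}\Pi\le m\}$ and let $\widehat\Pi_m$ be a minimizer over $\Pi\in\mathcal A_m$ of $R(\Pi)=\max_\ell\hat\beta_\ell^\top(I-\Pi)\hat\beta_\ell$. Set $\hat{\mathcal R}(m)=\sqrt{R(\widehat\Pi_m)}=\min_{\Pi\in\mathcal A_m}\sqrt{R(\Pi)}$, $\mathcal R^*(m)=\min_{\Pi\in\mathcal A_m}\max_\ell|(I-\Pi)^{1/2}\beta_\ell|$, and $\mathcal B^*=\{\sum_{\ell=1}^Lc_\ell\beta_\ell:\sum_\ell|c_\ell|\le1\}$.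 *)

(* Defs.v *)
From HB Require Import structures.
From mathcomp Require Import all_boot all_order all_algebra.
From mathcomp Require Import classical_sets boolp reals.
Set Implicit Arguments. Unset Strict Implicit. Unset Printing Implicit Defensive.
Import Order.TTheory GRing.Theory Num.Theory.
Local Open Scope ring_scope.
Local Open Scope classical_set_scope.

Section Defs.
Variables (R : realType) (d : nat).

Definition vnorm (x : 'cV[R]_d) : R := Num.sqrt (\sum_(i < d) x i 0 ^+ 2).

Definition qform (A : 'M[R]_d) (x : 'cV[R]_d) : R := (x^T *m A *m x) 0 0.

Definition psd (A : 'M[R]_d) : Prop := A^T = A /\ forall x, 0 <= qform A x.

Definition loewner_le (A B : 'M[R]_d) : Prop := psd (B - A).

(* the PSD square root A^{1/2}: the (unique) PSD matrix S with S S = A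
   (chosen by classical choice; 0 if A has none, which never happens for PSD A) *)
Definition msqrt (A : 'M[R]_d) : 'M[R]_d :=
  xget 0 [set S | psd S /\ S *m S = A].

Definition Acal (m : nat) : set 'M[R]_d :=
  [set P | P^T = P /\ loewner_le 0 P /\ loewner_le P 1%:M /\ \tr P <= m%:R].

Definition Rfun (L : nat) (bh : 'I_L -> 'cV[R]_d) (P : 'M[R]_d) : R :=
  \big[Num.max/0]_(l < L) qform (1%:M - P) (bh l).

(* R^*(m) = min over A_m of max_l |(I - Pi)^{1/2} b_l|  (written as an infimum) *)
Definition Rstar (L : nat) (b : 'I_L -> 'cV[R]_d) (m : nat) : R :=
  inf [set (\big[Num.max/0]_(l < L) vnorm (msqrt (1%:M - P) *m b l)) | P in Acal m].

Definition Bstar (L : nat) (b : 'I_L -> 'cV[R]_d) : set 'cV[R]_d :=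
  [set x | exists c : 'I_L -> R,
     \sum_(l < L) `|c l| <= 1 /\ x = \sum_(l < L) c l *: b l].

Definition in_subspace_dim (L : nat) (b : 'I_L -> 'cV[R]_d) (mstar : nat) : Prop :=
  exists U : 'M[R]_(mstar, d), \rank U = mstar /\ forall l, ((b l)^T <= U)%MS.

End Defs.

(* Main.v *)
Require Import Defs.
From HB Require Import structures.
From mathcomp Require Import all_boot all_order all_algebra.
From mathcomp Require Import classical_sets boolp reals.
From mathcomp.real_closed Require Import complex.
From mathcomp Require Import spectral sesquilinear.
Import Order.TTheory GRing.Theory Num.Theory.
Local Open Scope ring_scope.
Set Implicit Arguments. Unset Strict Implicit. Unset Printing Implicit Defensive.

From mathcomp Require Import lra ring.
Section Sqrt.
Variable R : realType.

Lemma interp (F : R -> R) (s : seq R) :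
  exists p : {poly R}, forall x, x \in s -> p.[x] = F x.
Proof.
elim: s => [|y s [p Hp]]; first by exists 0.
have [ys|nys] := boolP (y \in s).
  by exists p => x; rewrite inE => /orP[/eqP->|]; apply: Hp.
pose w := \prod_(z <- s) ('X - z%:P).
have wy : w.[y] != 0 by have := root_prod_XsubC s y; rewrite /root (negbTE nys) => ->.
exists (p + ((F y - p.[y]) / w.[y]) *: w) => x; rewrite inE hornerD hornerZ.
case/orP => [/eqP->| xs].
  by rewrite divfK // addrC subrK.
have /eqP -> : root w x by rewrite root_prod_XsubC.
by rewrite mulr0 addr0 Hp.
Qed.

Lemma horner_conj (F : fieldType) n (P D : 'M[F]_n.+1) (p : {poly F}) :
  P \in unitmx ->
  horner_mx (invmx P *m D *m P) p = invmx P *m horner_mx D p *m P.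
Proof.
move=> Pu; elim/poly_ind: p => [|p c IH].
  by rewrite !rmorph0 mulmx0 mul0mx.
rewrite !rmorphD !rmorphM /= !horner_mx_X !horner_mx_C IH -!mulmxE.
rewrite mulmxDr mulmxDl mul_mx_scalar -scalemxAl mulVmx // scalemx1.
by congr (_ + _); rewrite !mulmxA mulmxK.
Qed.

Lemma trmx_horner n (A : 'M[R]_n.+1) (p : {poly R}) :
  (horner_mx A p)^T = horner_mx A^T p.
Proof.
elim/poly_ind: p => [|p c IH]; first by rewrite !rmorph0 trmx0.
rewrite !rmorphD !rmorphM /= !horner_mx_X !horner_mx_C -!mulmxE.
rewrite linearD /= tr_scalar_mx trmx_mul IH; congr (_ + _).
by rewrite (comm_horner_mx p (erefl : comm_mx A^T A^T)).
Qed.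

Lemma psd_sqrt_aux n (A : 'M[R]_n.+1) : A^T = A ->
  (forall x : 'cV[R]_n.+1, 0 <= (x^T *m A *m x) 0 0) ->
  exists T : 'M[R]_n.+1, T^T = T /\ T *m T *m T *m T = A.
Proof.
move=> Asym Apsd.
pose f := real_complex R.
pose AC := map_mx f A.
have ACsym : AC \is symmetricmx.
  apply/is_hermitianmxP; rewrite expr0 scale1r map_mx_id //.
  idtac.
  by apply/matrixP => i j; rewrite /AC !mxE -[in RHS]Asym mxE.
have ACreal : AC \is a mxOver Num.real.
  by apply/mxOverP => i j; rewrite mxE; apply/complex_realP; exists (A i j).
have /orthomx_spectralP ACE := symmetric_normalmx ACsym ACreal.
have ddreal := hermitian_spectral_diag_real (realsym_hermsym ACsym ACreal).
move: ACE ddreal.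
set P := spectralmx AC; set dd := spectral_diag AC => ACE ddreal.
have Punit : P \in unitmx := spectral_unit AC.
have eig : forall i, exists x : R, dd 0 i = f x /\ 0 <= x.
  move=> i; have /complex_realP [x dx] := mxOverP ddreal 0 i.
  exists x; split => //.
  have : eigenvalue AC (dd 0 i).
    apply/eigenvalueP; exists (row i P).
      rewrite ACE !mulmxA -row_mul mulmxV // row1 -rowE row_diag_mx.
      by rewrite -scalemxAl -rowE.
    apply/eqP => /(congr1 (mulmx^~ (invmx P))).
    rewrite mul0mx -row_mul mulmxV // row1 => /matrixP /(_ 0 i).
    by rewrite !mxE !eqxx /= => /eqP; rewrite oner_eq0.
  rewrite eigenvalue_root_char /AC -map_char_poly dx /root horner_map fmorph_eq0.
  rewrite -/(root _ x) -eigenvalue_root_char => /eigenvalueP [v vA vn0].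
  have := Apsd v^T; rewrite trmxK vA -scalemxAl mxE.
  have vpos : 0 < (v *m v^T) 0 0.
    rewrite mxE lt_def sumr_ge0 ?andbT; last by move=> j _; rewrite mxE -expr2 sqr_ge0.
    apply: contra vn0 => /eqP H; apply/eqP/matrixP => a j; rewrite ord1 mxE.
    have := psumr_eq0P _ H; move=> /(_ _)/(_ j isT).
    rewrite mxE -expr2 => /(_ _)/eqP; rewrite sqrf_eq0 => /(_ _)/eqP; apply.
    by move=> k _; rewrite mxE -expr2 sqr_ge0.
  by rewrite pmulr_lge0.
have [g Hg] := fin_all_exists eig.
have [r Hr] := interp (fun x => Num.sqrt (Num.sqrt x)) [seq g i | i <- enum 'I_n.+1].
exists (horner_mx A r); split; first by rewrite trmx_horner Asym.
pose q := r ^+ 4 - 'X.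
have : horner_mx A q = 0.
  apply: (map_mx_inj (f:=f)); rewrite map_mx0 map_horner_mx -/AC ACE horner_conj //.
  rewrite horner_mx_diag.
  suff -> : map_mx (horner (map_poly f q)) dd = 0.
    by rewrite [diag_mx 0]linear0 mulmx0 mul0mx.
  apply/matrixP => a i; rewrite !mxE ord1; have [-> g0] := Hg i.
  rewrite horner_map /q !hornerE Hr; last first.
    by apply/mapP; exists i; rewrite ?mem_enum.
  have -> : (4 = 2 * 2)%N by [].
  by rewrite exprM !sqr_sqrtr ?sqrtr_ge0 // subrr rmorph0.
rewrite /q rmorphB rmorphXn /= horner_mx_X => /eqP; rewrite subr_eq0 => /eqP.
set T := horner_mx A r => <-.
by rewrite !exprS expr0 mulr1 -!mulmxE !mulmxA.
Qed.
End Sqrt.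

Section Main.
Variables (R : realType) (d : nat).
Implicit Types (x u v : 'cV[R]_d) (M S : 'M[R]_d).

Lemma psd_sqrt M : psd M -> exists S, psd S /\ S *m S = M.
Proof.
case: d M => [|n] M [Msym Mpsd].
  exists 0; split; last by apply/matrixP => [[]].
  by split; [rewrite trmx0 | move=> x; rewrite /qform !mxE big_ord0].
have [T [Tsym T4]] := @psd_sqrt_aux R n M Msym Mpsd.
exists (T *m T); split; last by rewrite !mulmxA.
split; first by rewrite trmx_mul Tsym.
move=> x; have -> : qform (T *m T) x = ((T *m x)^T *m (T *m x)) 0 0.
  by rewrite /qform trmx_mul Tsym !mulmxA.
by rewrite mxE sumr_ge0 // => i _; rewrite mxE -expr2 sqr_ge0.
Qed.

Lemma msqrtP M : psd M -> psd (msqrt M) /\ msqrt M *m msqrt M = M.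
Proof. by move=> /psd_sqrt H; apply: (xgetPex 0 H). Qed.

Lemma dot_sum x : (x^T *m x) 0 0 = \sum_i x i 0 ^+ 2.
Proof. by rewrite mxE; apply: eq_bigr => i _; rewrite mxE expr2. Qed.

Lemma vnorm_ge0 x : 0 <= vnorm x.
Proof. exact: sqrtr_ge0. Qed.

Lemma vnorm_sq x : vnorm x ^+ 2 = \sum_i x i 0 ^+ 2.
Proof. by rewrite sqr_sqrtr // sumr_ge0 // => i _; rewrite sqr_ge0. Qed.

Lemma vnormZ c x : vnorm (c *: x) = `|c| * vnorm x.
Proof.
rewrite /vnorm -sqrtr_sqr -sqrtrM ?sqr_ge0 // mulr_sumr; congr Num.sqrt.
by apply: eq_bigr => i _; rewrite mxE exprMn.
Qed.

Lemma vnormN x : vnorm (- x) = vnorm x.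
Proof. by rewrite -scaleN1r vnormZ normrN normr1 mul1r. Qed.

Lemma vnorm_eq0 x : vnorm x = 0 -> forall i, x i 0 = 0.
Proof.
move=> H i; have H2 : \sum_i x i 0 ^+ 2 = 0 by rewrite -vnorm_sq H expr0n.
apply/eqP; rewrite -sqrf_eq0; apply/eqP.
by apply: (psumr_eq0P _ H2) => // j _; rewrite sqr_ge0.
Qed.

Lemma CS u v : \sum_i u i 0 * v i 0 <= vnorm u * vnorm v.
Proof.
set a := vnorm u; set b := vnorm v.
have [a0|apos] := eqVneq a 0.
  by rewrite a0 mul0r big1 // => i _; rewrite (@vnorm_eq0 u a0) mul0r.
have [b0|bpos] := eqVneq b 0.
  by rewrite b0 mulr0 big1 // => i _; rewrite (@vnorm_eq0 v b0) mulr0.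
have ha : 0 < a by rewrite lt_def apos vnorm_ge0.
have hb : 0 < b by rewrite lt_def bpos vnorm_ge0.
have H : 0 <= \sum_i (b * u i 0 - a * v i 0) ^+ 2 by apply: sumr_ge0 => i _; apply: sqr_ge0.
have E : \sum_i (b * u i 0 - a * v i 0) ^+ 2 =
   b ^+ 2 * (\sum_i u i 0 ^+ 2) - 2 * (a * b) * (\sum_i u i 0 * v i 0)
   + a ^+ 2 * (\sum_i v i 0 ^+ 2).
  rewrite !mulr_sumr -sumrB -big_split /=; apply: eq_bigr => i _.
  by rewrite sqrrB !exprMn; ring.
move: H; rewrite E -!vnorm_sq -/a -/b => H.
have : 0 <= (a * b) * (a * b - \sum_i u i 0 * v i 0) * 2.
  by rewrite mulrBr; lra.
rewrite pmulr_lge0 // pmulr_rge0 ?mulr_gt0 //; lra.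
Qed.

Lemma vnormD u v : vnorm (u + v) <= vnorm u + vnorm v.
Proof.
rewrite -(ger0_norm (addr_ge0 (vnorm_ge0 u) (vnorm_ge0 v))) -sqrtr_sqr.
apply: ler_wsqrtr; rewrite sqrrD !vnorm_sq.
have -> : \sum_i (u + v) i 0 ^+ 2 = \sum_i u i 0 ^+ 2 + \sum_i v i 0 ^+ 2
   + 2 * \sum_i u i 0 * v i 0.
  rewrite mulr_sumr -!big_split /=; apply: eq_bigr => i _.
  by rewrite mxE sqrrD; ring.
have := CS u v; lra.
Qed.

Lemma vnorm_sum (I : finType) (w : I -> 'cV[R]_d) :
  vnorm (\sum_i w i) <= \sum_i vnorm (w i).
Proof.
apply: (big_ind2 (fun x y => vnorm x <= y)) => //.
- by rewrite /vnorm big1 ?sqrtr0 // => i _; rewrite mxE expr0n.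
- by move=> x1 y1 x2 y2 h1 h2; apply: le_trans (vnormD _ _) (lerD h1 h2).
Qed.

Lemma msqrt_norm M x : psd M -> vnorm (msqrt M *m x) = Num.sqrt (qform M x).
Proof.
move=> /msqrtP; set S := msqrt M => [[[Ssym _] SS]].
rewrite /vnorm /qform -SS; congr Num.sqrt.
by rewrite -dot_sum trmx_mul Ssym !mulmxA.
Qed.

Lemma qformB P x : qform (1%:M - P) x = (x^T *m x) 0 0 - qform P x.
Proof.
have h : forall (A B : 'M[R]_1), (A - B) 0 0 = A 0 0 - B 0 0 by move=> A B; rewrite !mxE.
by rewrite /qform mulmxBr mulmxBl mulmx1 h.
Qed.

Lemma nu_le P x : psd P -> psd (1%:M - P) ->
  vnorm (msqrt (1%:M - P) *m x) <= vnorm x.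
Proof.
move=> [_ Ppsd] H; rewrite msqrt_norm // /vnorm; apply: ler_wsqrtr.
by rewrite qformB dot_sum lerBlDr lerDl Ppsd.
Qed.

Lemma nuD M u v : vnorm (M *m (u + v)) <= vnorm (M *m u) + vnorm (M *m v).
Proof. by rewrite mulmxDr vnormD. Qed.

Lemma le_bmax (I : finType) (t : I -> R) i : t i <= \big[Num.max/0]_(l : I) t l.
Proof.
have : i \in index_enum I by rewrite mem_index_enum.
elim: (index_enum I) => [//|j s IH]; rewrite inE big_cons => /orP[/eqP<-|/IH h].
  by rewrite le_max lexx.
by rewrite le_max h orbT.
Qed.

Lemma bmax_le (I : finType) (t : I -> R) c : 0 <= c -> (forall i, t i <= c) ->
  \big[Num.max/0]_(l : I) t l <= c.
Proof.
move=> c0 H; elim: (index_enum I) => [|j s IH]; first by rewrite big_nil.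
by rewrite big_cons ge_max H IH.
Qed.

Lemma bmax_ge0 (I : finType) (t : I -> R) : 0 <= \big[Num.max/0]_(l : I) t l.
Proof.
elim: (index_enum I) => [|j s IH]; first by rewrite big_nil.
by rewrite big_cons le_max IH orbT.
Qed.

End Main.

Unset Implicit Arguments.
Local Open Scope classical_set_scope.

Theorem proposition4 (R : realType) (d L mstar : nat)
    (b bh : 'I_L -> 'cV[R]_d) (Pihat : 'M[R]_d) (m : nat) (eps : R) :
  in_subspace_dim b mstar ->
  (1 <= m)%N -> 0 <= eps ->
  Acal m Pihat ->
  (forall P, Acal m P -> Rfun bh Pihat <= Rfun bh P) ->
  (forall l, vnorm (bh l - b l) <= eps) ->
  [/\ Num.sqrt (Rfun bh Pihat) <= Rstar b m + eps,
      (forall bbar, Bstar b bbar ->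
         vnorm (msqrt (1%:M - Pihat) *m bbar) <= Rstar b m + 2 * eps)
    & ((m < mstar)%N -> Num.max (Rstar b m - eps) 0 <= Num.sqrt (Rfun bh Pihat))].
Proof.
move=> _ m1 eps0 HPi Hmin Hb.
have Ppsd : forall P : 'M[R]_d, Acal m P -> psd P /\ psd (1%:M - P).
  move=> P HP; have [_ [H0 [H1 _]]] : P^T = P /\ loewner_le 0 P /\ loewner_le P 1%:M /\ \tr P <= m%:R := HP.
  split => //.
  by move: H0; rewrite /loewner_le subr0.
pose F := fun P : 'M[R]_d => \big[Num.max/0]_(l < L) vnorm (msqrt (1%:M - P) *m b l).
have E0 : Acal m 0.
  split; first by rewrite trmx0.
  split.
    rewrite /loewner_le subr0; split; first by rewrite trmx0.
    by move=> x; rewrite /qform mulmx0 mul0mx mxE.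
  split; last by rewrite mxtrace0 ler0n.
  rewrite /loewner_le subr0; split; first by rewrite trmx1.
  move=> x; rewrite /qform mulmx1 dot_sum sumr_ge0 // => i _; apply: sqr_ge0.
have Rstar_eq : Rstar b m = inf [set F P | P in Acal m] by [].
have Ene : [set F P | P in Acal m] !=set0 by exists (F 0), 0.
have Elb : has_lbound [set F P | P in Acal m].
  by exists 0 => y [P _ <-]; apply: bmax_ge0.
have stepA : forall P : 'M[R]_d, Acal m P -> Num.sqrt (Rfun bh P) <= F P + eps.
  move=> P /Ppsd [PP PM].
  have c0 : 0 <= F P + eps by rewrite addr_ge0 // bmax_ge0.
  rewrite -(ger0_norm c0) -sqrtr_sqr; apply: ler_wsqrtr.
  apply: bmax_le; first exact: sqr_ge0.
  move=> l; rewrite -(sqr_sqrtr (proj2 PM (bh l))) -msqrt_norm //.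
  have h : vnorm (msqrt (1%:M - P) *m bh l) <= F P + eps.
    have -> : bh l = b l + (bh l - b l) by rewrite addrC subrK.
    apply: le_trans (nuD _ _ _) _; apply: lerD.
      exact: (le_bmax (fun l => vnorm (msqrt (1%:M - P) *m b l)) l).
    by apply: le_trans (nu_le _ PP PM) (Hb l).
  by rewrite !expr2; apply: ler_pM => //; apply: vnorm_ge0.
have part1 : Num.sqrt (Rfun bh Pihat) <= Rstar b m + eps.
  rewrite -lerBlDr Rstar_eq; apply: lb_le_inf => // y [P HP <-].
  rewrite lerBlDr; apply: le_trans (stepA P HP); apply: ler_wsqrtr; exact: Hmin.
have [PPh PMh] := Ppsd _ HPi.
have stepB : forall l, vnorm (msqrt (1%:M - Pihat) *m b l) <= Num.sqrt (Rfun bh Pihat) + eps.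
  move=> l.
  have -> : b l = bh l + (b l - bh l) by rewrite addrC subrK.
  apply: le_trans (nuD _ _ _) _; apply: lerD.
    rewrite msqrt_norm //; apply: ler_wsqrtr.
    exact: (le_bmax (fun l => qform (1%:M - Pihat) (bh l)) l).
  by apply: le_trans (nu_le _ PPh PMh) _; rewrite -opprB vnormN.
have G0 : 0 <= Num.sqrt (Rfun bh Pihat) + eps by rewrite addr_ge0 ?sqrtr_ge0.
split => //.
  move=> bbar [c [Hc ->]].
  rewrite mulmx_sumr; apply: le_trans (vnorm_sum _) _.
  apply: (@le_trans _ _ ((\sum_(l < L) `|c l|) * (Num.sqrt (Rfun bh Pihat) + eps))).
    rewrite mulr_suml; apply: ler_sum => l _.
    by rewrite -scalemxAr vnormZ; apply: ler_wpM2l => //; apply: stepB.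
  apply: (@le_trans _ _ (1 * (Num.sqrt (Rfun bh Pihat) + eps))).
    exact: ler_wpM2r.
  by rewrite mul1r; lra.
move=> _; rewrite ge_max sqrtr_ge0 andbT.
have h1 : Rstar b m <= F Pihat.
  by rewrite Rstar_eq; apply: (ge_inf Elb); exists Pihat.
have h2 : F Pihat <= Num.sqrt (Rfun bh Pihat) + eps by apply: bmax_le.
lra.
Qed.
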